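(* Let the unit segment be fixed in the plane. A real number $r$ is RA-constructible if and only if $r$ can be obtained from $1$ by finitely many applications of the field operations $+,-,\times,\div$ (division by nonzero numbers), of $x\mapsto\sqrt{x}$ applied to previously obtained positive reals $x$, and of $x\mapsto\sin(\pi x)$ applied to previously obtained reals $x$. Likewise, a real number $r$ is RRA-constructible if and only if $r$ can be obtained from $1$ by finitely many applications of the field operations, of $x\mapsto\sqrt{x}$ applied to previously obtained positive reals $x$, and of $x\mapsto\frac{1}{\pi}\arcsin(x)$ applied to previously obtained reals $x$ with $|x|\le 1$.
   Context: Constructions take place in the Euclidean plane, starting from a segment declared to have length $1$ (it fixes Cartesian coordinates: the origin at one endpoint, the horizontal axis along the segment). The available tools are the straightedge (draw the line through two constructed points), the compass (draw the circle with a constructed center through a constructed point) and intersection of constructed lines/circles, together with one additional tool: - the right anglesector (RA): given two constructed segments of lengths $p,q$, it divides the right angle in the ratio $p:q$, i.e. produces the ray at angle $\frac{p}{q}\cdot\frac{\pi}{2}$ inside a given constructed right angle (for $p\le q$); - the reverse right anglesector (RRA): given a constructed acute angle $\theta$ inside a constructed right angle and a constructed segment, it divides that segment in the ratio $\theta:\frac{\pi}{2}$ (i.e. produces the point at fraction $\frac{2\theta}{\pi}$ of its length). A real number is RA-constructible (resp. RRA-constructible) if its absolute value is the length of a segment constructible from the unit segment with straightedge, compass and the RA (resp. RRA) tool. *)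

(* Defs.v *)
From Stdlib Require Import Reals List.
Open Scope R_scope.

(** Points of the Euclidean plane, in the Cartesian coordinates fixed by the
    unit segment: one endpoint is (0,0), the other is (1,0). *)
Definition point := (R * R)%type.

Definition padd (a b : point) : point := (fst a + fst b, snd a + snd b).
Definition psub (a b : point) : point := (fst a - fst b, snd a - snd b).
Definition pscale (t : R) (a : point) : point := (t * fst a, t * snd a).
Definition dot (a b : point) : R := fst a * fst b + snd a * snd b.
Definition norm (a : point) : R := sqrt (dot a a).
Definition dist (a b : point) : R := norm (psub b a).

(** Constructed curves: lines (straightedge), circles (compass) and rays
    (output of the right anglesector). *)
Inductive curve : Type :=
  | Line   (a b : point)
  | Circle (c p : point)
  | Ray    (o d : point).

Definition on_curve (k : curve) (z : point) : Prop :=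
  match k with
  | Line a b   => exists t : R, z = padd a (pscale t (psub b a))
  | Circle c p => dist c z = dist c p
  | Ray o d    => exists t : R, 0 <= t /\ z = padd o (pscale t d)
  end.

Inductive tool : Type := RA | RRA.

Definition right_angle (o p q : point) : Prop :=
  p <> o /\ q <> o /\ dot (psub p o) (psub q o) = 0.

Definition unit_dir (o p : point) : point := pscale (/ norm (psub p o)) (psub p o).

Definition RA_ray (o p q : point) (plen qlen : R) : curve :=
  let phi := (plen / qlen) * (PI / 2) in
  Ray o (padd (pscale (cos phi) (unit_dir o p)) (pscale (sin phi) (unit_dir o q))).

Definition inside_right_angle (o p q x : point) : Prop :=
  0 < dot (psub x o) (unit_dir o p) /\ 0 < dot (psub x o) (unit_dir o q).

(** The (acute) angle between the arm op and the ray ox, for x inside the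
    right angle (o;p,q): its tangent is (coordinate along oq)/(coordinate along op). *)
Definition angle_in_right_angle (o p q x : point) : R :=
  atan (dot (psub x o) (unit_dir o q) / dot (psub x o) (unit_dir o p)).

(** RRA: the point dividing segment [a,b] in ratio theta : pi/2, i.e. at
    fraction 2 theta / pi of its length from a. *)
Definition RRA_point (theta : R) (a b : point) : point :=
  padd a (pscale (2 * theta / PI) (psub b a)).

Inductive cpt (m : tool) : point -> Prop :=
  | cpt_O : cpt m (0, 0)
  | cpt_I : cpt m (1, 0)
  | cpt_inter : forall (k1 k2 : curve) (z : point),
      ccurve m k1 -> ccurve m k2 ->
      on_curve k1 z -> on_curve k2 z ->
      (* the two curves meet in finitely many points (genuine intersection) *)
      (exists l : list point, forall w, on_curve k1 w -> on_curve k2 w -> In w l) ->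
      cpt m z
  | cpt_RRA : forall o p q x a b : point,
      m = RRA ->
      cpt m o -> cpt m p -> cpt m q -> cpt m x -> cpt m a -> cpt m b ->
      right_angle o p q -> inside_right_angle o p q x ->
      cpt m (RRA_point (angle_in_right_angle o p q x) a b)
with ccurve (m : tool) : curve -> Prop :=
  | cc_line : forall a b : point,
      cpt m a -> cpt m b -> a <> b -> ccurve m (Line a b)
  | cc_circle : forall c p : point,
      cpt m c -> cpt m p -> ccurve m (Circle c p)
  | cc_RA : forall o p q a b c d : point,
      m = RA ->
      cpt m o -> cpt m p -> cpt m q ->
      cpt m a -> cpt m b -> cpt m c -> cpt m d ->
      right_angle o p q ->
      0 < dist c d -> dist a b <= dist c d ->
      ccurve m (RA_ray o p q (dist a b) (dist c d)).

Definition constructible (m : tool) (r : R) : Prop :=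
  exists a b : point, cpt m a /\ cpt m b /\ Rabs r = dist a b.

Definition RA_constructible (r : R) : Prop := constructible RA r.
Definition RRA_constructible (r : R) : Prop := constructible RRA r.

Inductive obtainable (f : R -> R) (dom : R -> Prop) : R -> Prop :=
  | ob_one : obtainable f dom 1
  | ob_add : forall x y, obtainable f dom x -> obtainable f dom y -> obtainable f dom (x + y)
  | ob_sub : forall x y, obtainable f dom x -> obtainable f dom y -> obtainable f dom (x - y)
  | ob_mul : forall x y, obtainable f dom x -> obtainable f dom y -> obtainable f dom (x * y)
  | ob_div : forall x y, obtainable f dom x -> obtainable f dom y -> y <> 0 ->
      obtainable f dom (x / y)
  | ob_sqrt : forall x, obtainable f dom x -> 0 < x -> obtainable f dom (sqrt x)
  | ob_fun : forall x, obtainable f dom x -> dom x -> obtainable f dom (f x).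

Definition RA_obtainable : R -> Prop :=
  obtainable (fun x => sin (PI * x)) (fun _ => True).
Definition RRA_obtainable : R -> Prop :=
  obtainable (fun x => asin x / PI) (fun x => Rabs x <= 1).

(* Main.v *)
Require Import Defs.
From Stdlib Require Import Reals.
From Stdlib Require Import Lra Lia Psatz List FinFun ZArith.
Import Defs.
Open Scope R_scope.

Definition sq2 (a b : point) : R := dot (psub b a) (psub b a).

Lemma sq2_ge0 a b : 0 <= sq2 a b.
Proof. destruct a as [a1 a2], b as [b1 b2]; unfold sq2, dot, psub; simpl.
  pose proof (Rle_0_sqr (b1 - a1)); pose proof (Rle_0_sqr (b2 - a2)); unfold Rsqr in *; lra. Qed.

Lemma sqrt_sq_abs x : sqrt (x*x) = Rabs x.
Proof. rewrite <- sqrt_Rsqr_abs. reflexivity. Qed.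
Lemma abs_le e d : Rabs e <= d -> - d <= e <= d.
Proof. intro H. pose proof (Rle_abs e). pose proof (Rle_abs (-e)). rewrite Rabs_Ropp in H1. lra. Qed.
Lemma sqnn x : 0 <= x * x.
Proof. pose proof (Rle_0_sqr x); unfold Rsqr in *; lra. Qed.

Lemma dist_sq2 a b : dist a b = sqrt (sq2 a b).
Proof. reflexivity. Qed.

Lemma on_circle_iff c p z : on_curve (Circle c p) z <-> sq2 c z = sq2 c p.
Proof.
  simpl. rewrite !dist_sq2. split; intro H.
  - apply sqrt_inj; auto using sq2_ge0.
  - now rewrite H.
Qed.

Lemma no_inf (g : nat -> point) :
  (forall n m, g n = g m -> n = m) -> forall l : list point, ~ (forall n, In (g n) l).
Proof.
  intros Hinj l Hall.
  assert (H1 : NoDup (map g (seq 0 (S (length l))))).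
  { apply Injective_map_NoDup; [exact Hinj | apply seq_NoDup]. }
  assert (H2 : incl (map g (seq 0 (S (length l)))) l).
  { intros w Hw. apply in_map_iff in Hw. destruct Hw as [n [<- _]]. apply Hall. }
  pose proof (NoDup_incl_length H1 H2) as H3.
  rewrite length_map, length_seq in H3. lia.
Qed.

Definition radN c1 c2 d1 d2 := (d1 - c1) * (d1 - c1) + (d2 - c2) * (d2 - c2).
Definition radk c1 c2 d1 d2 R1 R2 := R1 - R2 + (d1 * d1 + d2 * d2) - (c1 * c1 + c2 * c2).
Definition radA1 c1 c2 d1 d2 R1 R2 := radk c1 c2 d1 d2 R1 R2 / (2 * radN c1 c2 d1 d2) * (d1 - c1).
Definition radA2 c1 c2 d1 d2 R1 R2 := radk c1 c2 d1 d2 R1 R2 / (2 * radN c1 c2 d1 d2) * (d2 - c2).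

Lemma radical c1 c2 d1 d2 R1 R2 z1 z2 : radN c1 c2 d1 d2 <> 0 ->
  (z1 - c1) * (z1 - c1) + (z2 - c2) * (z2 - c2) = R1 ->
  (z1 - d1) * (z1 - d1) + (z2 - d2) * (z2 - d2) = R2 ->
  exists t, z1 = radA1 c1 c2 d1 d2 R1 R2 + t * (- (d2 - c2)) /\
            z2 = radA2 c1 c2 d1 d2 R1 R2 + t * (d1 - c1).
Proof.
  intros HN E1 E2.
  unfold radA1, radA2, radN in *.
  set (n1 := d1 - c1) in *. set (n2 := d2 - c2) in *.
  set (N := n1 * n1 + n2 * n2) in *.
  assert (Hk : radk c1 c2 d1 d2 R1 R2 = 2 * (n1 * z1 + n2 * z2)).
  { unfold radk, n1, n2. rewrite <- E1, <- E2. ring. }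
  rewrite Hk. clear Hk E1 E2.
  set (A1 := 2 * (n1 * z1 + n2 * z2) / (2 * N) * n1).
  set (A2 := 2 * (n1 * z1 + n2 * z2) / (2 * N) * n2).
  assert (Hrel : n1 * (z1 - A1) + n2 * (z2 - A2) = 0).
  { unfold A1, A2, N in *. field; auto. }
  clearbody A1 A2.
  exists (((z1 - A1) * (- n2) + (z2 - A2) * n1) / N).
  split.
  - assert (E : (z1 - A1) * N - ((z1 - A1) * (- n2) + (z2 - A2) * n1) * (- n2)
                = n1 * (n1 * (z1 - A1) + n2 * (z2 - A2))) by (unfold N; ring).
    rewrite Hrel, Rmult_0_r in E.
    set (X := (z1 - A1) * (- n2) + (z2 - A2) * n1) in *.
    assert (HX : X * (- n2) = (z1 - A1) * N) by lra.
    replace (X / N * (- n2)) with (X * (- n2) / N) by (field; auto).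
    rewrite HX. field; auto.
  - assert (E : (z2 - A2) * N - ((z1 - A1) * (- n2) + (z2 - A2) * n1) * n1
                = n2 * (n1 * (z1 - A1) + n2 * (z2 - A2))) by (unfold N; ring).
    rewrite Hrel, Rmult_0_r in E.
    set (X := (z1 - A1) * (- n2) + (z2 - A2) * n1) in *.
    assert (HX : X * n1 = (z2 - A2) * N) by lra.
    replace (X / N * n1) with (X * n1 / N) by (field; auto).
    rewrite HX. field; auto.
Qed.

Section Gen.
Variable f : R -> R.
Variable dom : R -> Prop.
Notation Ob := (obtainable f dom).

Lemma ob0 : Ob 0.
Proof. replace 0 with (1 - 1) by ring. apply ob_sub; apply ob_one. Qed.
Lemma ob2 : Ob 2.
Proof. replace 2 with (1 + 1) by ring. apply ob_add; apply ob_one. Qed.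
Lemma ob_opp x : Ob x -> Ob (- x).
Proof. intro. replace (-x) with (0 - x) by ring. apply ob_sub; auto using ob0. Qed.
Lemma ob_sqrt0 x : Ob x -> 0 <= x -> Ob (sqrt x).
Proof.
  intros H H0. destruct (Req_dec x 0) as [->|Hn].
  - rewrite sqrt_0. apply ob0.
  - apply ob_sqrt; auto. lra.
Qed.
Lemma ob_abs x : Ob x -> Ob (Rabs x).
Proof. intro. unfold Rabs. destruct (Rcase_abs x); auto using ob_opp. Qed.

Ltac ob := repeat (first [assumption | apply ob_one | apply ob0 | apply ob2
   | apply ob_add | apply ob_sub | apply ob_mul | apply ob_opp]).

Definition OP (z : point) := Ob (fst z) /\ Ob (snd z).

Lemma OP_sq2 a b : OP a -> OP b -> Ob (sq2 a b).
Proof. intros [] []. unfold sq2, dot, psub; simpl. ob. Qed.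

Lemma OP_dist a b : OP a -> OP b -> Ob (dist a b).
Proof. intros. rewrite dist_sq2. apply ob_sqrt0; auto using OP_sq2, sq2_ge0. Qed.

Definition nz (v : point) := fst v * fst v + snd v * snd v <> 0.

Lemma LL_alg a1 a2 v1 v2 b1 b2 w1 w2 t s :
  Ob a1 -> Ob a2 -> Ob v1 -> Ob v2 -> Ob b1 -> Ob b2 -> Ob w1 -> Ob w2 ->
  v1 * w2 - v2 * w1 <> 0 ->
  a1 + t * v1 = b1 + s * w1 -> a2 + t * v2 = b2 + s * w2 -> Ob t.
Proof.
  intros Ha1 Ha2 Hv1 Hv2 Hb1 Hb2 Hw1 Hw2 Hd E1 E2.
  replace t with (((b1 - a1) * w2 - (b2 - a2) * w1) / (v1 * w2 - v2 * w1)).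
  - apply ob_div; auto; ob.
  - assert (b1 = a1 + t*v1 - s*w1) by lra. assert (b2 = a2 + t*v2 - s*w2) by lra.
    subst b1 b2. field; auto.
Qed.

Lemma LC_alg a1 a2 v1 v2 c1 c2 R0 t :
  Ob a1 -> Ob a2 -> Ob v1 -> Ob v2 -> Ob c1 -> Ob c2 -> Ob R0 ->
  v1 * v1 + v2 * v2 <> 0 ->
  (a1 + t * v1 - c1) * (a1 + t * v1 - c1) + (a2 + t * v2 - c2) * (a2 + t * v2 - c2) = R0 ->
  Ob t.
Proof.
  intros Ha1 Ha2 Hv1 Hv2 Hc1 Hc2 HR Hnz Heq.
  set (A := v1 * v1 + v2 * v2).
  set (B := 2 * ((a1 - c1) * v1 + (a2 - c2) * v2)).
  set (C := (a1 - c1) * (a1 - c1) + (a2 - c2) * (a2 - c2) - R0).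
  assert (HD : B * B - 4 * A * C = (2 * A * t + B) * (2 * A * t + B)).
  { unfold A, B, C. rewrite <- Heq. ring. }
  assert (HobD : Ob (sqrt (B * B - 4 * A * C))).
  { apply ob_sqrt0. unfold A, B, C; ob. rewrite HD; apply sqnn. }
  assert (HA : Ob A) by (unfold A; ob).
  assert (HB : Ob B) by (unfold B; ob).
  rewrite HD, sqrt_sq_abs in HobD.
  assert (HA0 : 2 * A <> 0) by (unfold A; lra).
  unfold Rabs in HobD. destruct (Rcase_abs (2 * A * t + B)).
  - replace t with ((- (- (2 * A * t + B)) - B) / (2 * A)) by (field; auto).
    apply ob_div; auto; ob.
  - replace t with (((2 * A * t + B) - B) / (2 * A)) by (field; auto).
    apply ob_div; auto; ob.
Qed.

Lemma sum_sq0 x y : x * x + y * y = 0 -> x = 0 /\ y = 0.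
Proof.
  intro H. pose proof (sqnn x). pose proof (sqnn y).
  assert (x * x = 0) by lra. assert (y * y = 0) by lra.
  split; [destruct (Rmult_integral _ _ H2) | destruct (Rmult_integral _ _ H3)]; auto.
Qed.

Lemma neq_nz a1 a2 b1 b2 : (a1, a2) <> (b1, b2) ->
  (b1 - a1) * (b1 - a1) + (b2 - a2) * (b2 - a2) <> 0.
Proof.
  intros Hn H. apply sum_sq0 in H. destruct H. apply Hn. f_equal; lra.
Qed.

Definition GC (k : curve) : Prop :=
  match k with
  | Line a b => OP a /\ OP b /\ a <> b
  | Circle c p => OP c /\ OP p
  | Ray o d => OP o /\ OP d
  end.

Definition islin (k : curve) : Prop :=
  match k with Circle _ _ => False | _ => True end.

Definition LinInfo (k : curve) (z : point) : Prop :=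
  exists a1 a2 v1 v2 t d, Ob a1 /\ Ob a2 /\ Ob v1 /\ Ob v2 /\
    v1 * v1 + v2 * v2 <> 0 /\ z = (a1 + t * v1, a2 + t * v2) /\ 0 < d /\
    forall e, Rabs e <= d -> on_curve k (fst z + e * v1, snd z + e * v2).

Lemma lin_info k z : GC k -> islin k -> on_curve k z -> OP z \/ LinInfo k z.
Proof.
  destruct k as [[a1 a2] [b1 b2] | c p | [o1 o2] [d1 d2]]; simpl; intros HG Hl Hon.
  - destruct HG as [[Ha1 Ha2] [[Hb1 Hb2] Hab]]. right.
    destruct Hon as [t Ht]. unfold padd, pscale, psub in Ht; simpl in Ht.
    exists a1, a2, (b1 - a1), (b2 - a2), t, 1.
    split; [auto|]. split; [auto|]. split; [ob|]. split; [ob|].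
    split; [apply neq_nz; auto|]. split; [rewrite Ht; f_equal; ring|]. split; [lra|].
    + intros e _. exists (t + e). rewrite Ht. unfold padd, pscale, psub; simpl.
      f_equal; ring.
  - contradiction.
  - destruct HG as [[Ho1 Ho2] [Hd1 Hd2]]. destruct Hon as [t [Ht0 Ht]].
    unfold padd, pscale in Ht; simpl in Ht.
    destruct (Req_dec (d1 * d1 + d2 * d2) 0) as [Hz|Hnz].
    + apply sum_sq0 in Hz. destruct Hz as [-> ->]. left. rewrite Ht; simpl.
      split; [replace (o1 + t * 0) with o1 by ring | replace (o2 + t * 0) with o2 by ring]; auto.
    + destruct (Req_dec t 0) as [->|Ht1].
      * left. rewrite Ht; simpl. split.
        replace (o1 + 0 * d1) with o1 by ring; auto.
        replace (o2 + 0 * d2) with o2 by ring; auto.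
      * right. exists o1, o2, d1, d2, t, t.
        split; [auto|]. split; [auto|]. split; [auto|]. split; [auto|].
        split; [auto|]. split; [rewrite Ht; f_equal; ring|]. split; [lra|].
        intros e He. exists (t + e). split.
        -- apply abs_le in He. lra.
        -- rewrite Ht. unfold padd, pscale; simpl. f_equal; ring.
Qed.

Lemma OP_param a1 a2 v1 v2 t : Ob a1 -> Ob a2 -> Ob v1 -> Ob v2 -> Ob t ->
  OP (a1 + t * v1, a2 + t * v2).
Proof. intros. split; simpl; ob. Qed.

Lemma inter_lin_lin k1 k2 z : LinInfo k1 z -> LinInfo k2 z ->
  (exists l : list point, forall w, on_curve k1 w -> on_curve k2 w -> In w l) -> OP z.
Proof.
  intros [a1 [a2 [v1 [v2 [t [d [Ha1 [Ha2 [Hv1 [Hv2 [Hv [Hz [Hd Hk1]]]]]]]]]]]]]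
         [b1 [b2 [w1 [w2 [s [d' [Hb1 [Hb2 [Hw1 [Hw2 [Hw [Hz' [Hd' Hk2]]]]]]]]]]]]] [l Hl].
  destruct (Req_dec (v1 * w2 - v2 * w1) 0) as [Hdet|Hdet].
  - exfalso.
    set (N := w1 * w1 + w2 * w2).
    set (mu := (v1 * w1 + v2 * w2) / N).
    assert (HN : N <> 0) by exact Hw.
    assert (E1 : v1 = mu * w1).
    { unfold mu. apply (Rmult_eq_reg_r N); [|auto]. field_simplify; auto.
      unfold N. replace (v1 * (w1 * w1 + w2 * w2)) with (v1 * w1 * w1 + w2 * (v1 * w2)) by ring.
      replace (v1 * w2) with (v2 * w1) by lra. ring. }
    assert (E2 : v2 = mu * w2).
    { unfold mu. apply (Rmult_eq_reg_r N); [|auto]. field_simplify; auto.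
      unfold N. replace (v2 * (w1 * w1 + w2 * w2)) with (v2 * w2 * w2 + w1 * (v2 * w1)) by ring.
      replace (v2 * w1) with (v1 * w2) by lra. ring. }
    clearbody mu.
    assert (Hmu : mu <> 0).
    { intro H0. apply Hv. rewrite E1, E2, H0. ring. }
    set (D := Rmin d (d' / Rabs mu)).
    assert (HD : 0 < D).
    { unfold D. apply Rmin_glb_lt; auto. apply Rdiv_lt_0_compat; auto. apply Rabs_pos_lt; auto. }
    apply (no_inf (fun n => (fst z + (D / (INR n + 1)) * v1, snd z + (D / (INR n + 1)) * v2)))
      with (l := l).
    + intros n m H. injection H as H1 H2.
      assert (Hq : D / (INR n + 1) = D / (INR m + 1)).
      { destruct (Req_dec v1 0) as [Hv10|Hv10].
        - assert (v2 <> 0) by (intro H0; apply Hv; rewrite Hv10, H0; ring).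
          apply (Rmult_eq_reg_r v2); auto; lra.
        - apply (Rmult_eq_reg_r v1); auto; lra. }
      pose proof (pos_INR n). pose proof (pos_INR m).
      assert (INR n = INR m).
      { apply (Rmult_eq_reg_l D) in Hq; [|lra]. 
        assert (/ (INR n + 1) = / (INR m + 1)) by exact Hq.
        apply Rinv_eq_reg in H3. lra. }
      apply INR_eq; auto.
    + intro n. pose proof (pos_INR n).
      assert (He : 0 <= D / (INR n + 1) <= D).
      { split. unfold Rdiv; apply Rmult_le_pos; [lra | left; apply Rinv_0_lt_compat; lra].
        unfold Rdiv. rewrite <- (Rmult_1_r D) at 2. apply Rmult_le_compat_l; [lra|].
        rewrite <- Rinv_1. apply Rinv_le_contravar; lra. }
      set (e := D / (INR n + 1)) in *.
      apply Hl.
      * apply Hk1. rewrite Rabs_right by lra. apply Rle_trans with D; [lra|apply Rmin_l].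
      * replace (fst z + e * v1, snd z + e * v2) with (fst z + (e * mu) * w1, snd z + (e * mu) * w2).
        2: { rewrite E1, E2. f_equal; ring. }
        apply Hk2. rewrite Rabs_mult. rewrite (Rabs_right e) by lra.
        apply Rle_trans with (D * Rabs mu).
        -- apply Rmult_le_compat_r; [apply Rabs_pos|lra].
        -- assert (D <= d' / Rabs mu) by apply Rmin_r.
           pose proof (Rabs_pos_lt _ Hmu).
           apply (Rmult_le_compat_r (Rabs mu)) in H0; [|lra].
           unfold Rdiv in H0. rewrite Rmult_assoc, Rinv_l in H0; lra.
  - rewrite Hz. apply OP_param; auto.
    apply (LL_alg a1 a2 v1 v2 b1 b2 w1 w2 t s); auto.
    + rewrite Hz in Hz'. injection Hz'; auto.
    + rewrite Hz in Hz'. injection Hz'; auto.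
Qed.

Lemma inter_lin_circ a1 a2 v1 v2 t c p :
  Ob a1 -> Ob a2 -> Ob v1 -> Ob v2 -> v1 * v1 + v2 * v2 <> 0 -> OP c -> OP p ->
  sq2 c (a1 + t * v1, a2 + t * v2) = sq2 c p -> OP (a1 + t * v1, a2 + t * v2).
Proof.
  intros. apply OP_param; auto. destruct c as [c1 c2]. destruct H4.
  apply (LC_alg a1 a2 v1 v2 c1 c2 (sq2 (c1, c2) p) t); auto.
  apply OP_sq2; auto. split; auto.
Qed.

Lemma inter_CC c p c' p' z : OP c -> OP p -> OP c' -> OP p' ->
  on_curve (Circle c p) z -> on_curve (Circle c' p') z ->
  (exists l : list point, forall w, on_curve (Circle c p) w -> on_curve (Circle c' p') w -> In w l) ->
  OP z.
Proof.
  intros Hc Hp Hc' Hp' H1 H2 [l Hl].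
  rewrite on_circle_iff in H1, H2.
  destruct c as [c1 c2], c' as [d1 d2], z as [z1 z2].
  destruct (Req_dec (radN c1 c2 d1 d2) 0) as [HN|HN].
  - unfold radN in HN. apply sum_sq0 in HN. destruct HN as [E1 E2].
    assert (d1 = c1) by lra. assert (d2 = c2) by lra. subst d1 d2.
    destruct (Req_dec (sq2 (c1, c2) p) 0) as [HR|HR].
    + rewrite HR in H1. unfold sq2, dot, psub in H1; simpl in H1.
      apply sum_sq0 in H1. destruct H1. replace z1 with c1 by lra. replace z2 with c2 by lra.
      exact Hc.
    + exfalso.
      set (r := sqrt (sq2 (c1, c2) p)).
      assert (Hr : 0 < r) by (apply sqrt_lt_R0; pose proof (sq2_ge0 (c1,c2) p); lra).
      assert (Hrr : r * r = sq2 (c1, c2) p) by (apply sqrt_sqrt, sq2_ge0).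
      set (u := fun n : nat => (1 - INR n * INR n) / (1 + INR n * INR n)).
      set (w := fun n : nat => 2 * INR n / (1 + INR n * INR n)).
      assert (Huw : forall n, u n * u n + w n * w n = 1).
      { intro n. unfold u, w. pose proof (sqnn (INR n)). field. lra. }
      apply (no_inf (fun n => (c1 + r * u n, c2 + r * w n))) with (l := l).
      * intros n m H. injection H as H3 H4.
        assert (Hu : u n = u m).
        { apply (Rmult_eq_reg_l r); lra. }
        unfold u in Hu. pose proof (sqnn (INR n)). pose proof (sqnn (INR m)).
        assert (INR n * INR n = INR m * INR m).
        { set (a := INR n * INR n) in *. set (b := INR m * INR m) in *.
          assert (Ea : 1 - a = (1 - a) / (1 + a) * (1 + a)) by (field; lra).
          assert (Eb : 1 - b = (1 - b) / (1 + b) * (1 + b)) by (field; lra).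
          rewrite Hu in Ea. set (q := (1 - b) / (1 + b)) in *. clearbody q a b.
          assert (Hq : 1 + q <> 0) by (intro Hq0; assert (Hq1 : q = -1) by lra; rewrite Hq1 in Ea; lra).
          assert (E0 : 1 - a - q * (1 + a) = 0) by (rewrite Ea; ring).
          assert (E0' : 1 - b - q * (1 + b) = 0) by (rewrite Eb; ring).
          assert (H7 : (a - b) * (1 + q) = 0).
          { replace ((a - b) * (1 + q)) with ((1 - b - q * (1 + b)) - (1 - a - q * (1 + a))) by ring.
            rewrite E0, E0'. ring. }
          apply Rmult_integral in H7. destruct H7; lra. }
        apply INR_eq. apply Rsqr_inj; try apply pos_INR. exact H5.
      * intro n. apply Hl; rewrite on_circle_iff.
        -- rewrite <- Hrr. unfold sq2, dot, psub; simpl.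
           replace (c1 + r * u n - c1) with (r * u n) by ring.
           replace (c2 + r * w n - c2) with (r * w n) by ring.
           transitivity (r * r * (u n * u n + w n * w n)); [ring|].
           rewrite Huw; ring.
        -- rewrite <- H2, H1, <- Hrr. unfold sq2, dot, psub; simpl.
           replace (c1 + r * u n - c1) with (r * u n) by ring.
           replace (c2 + r * w n - c2) with (r * w n) by ring.
           transitivity (r * r * (u n * u n + w n * w n)); [ring|].
           rewrite Huw; ring.
  - unfold sq2, dot, psub in H1, H2; simpl in H1, H2.
    destruct (radical c1 c2 d1 d2 _ _ z1 z2 HN H1 H2) as [t [E1 E2]].
    rewrite E1, E2. destruct Hc as [Hc1 Hc2]. destruct Hc' as [Hd1 Hd2]. simpl in *.
    assert (HR1 : Ob (sq2 (c1, c2) p)) by (apply OP_sq2; auto; split; auto).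
    assert (HR2 : Ob (sq2 (d1, d2) p')) by (apply OP_sq2; auto; split; auto).
    assert (HNo : Ob (radN c1 c2 d1 d2)) by (unfold radN; ob).
    assert (Hko : Ob (radk c1 c2 d1 d2 (sq2 (c1, c2) p) (sq2 (d1, d2) p'))) by (unfold radk; ob).
    apply inter_lin_circ with (c := (c1, c2)) (p := p); auto.
    + unfold radA1. apply ob_mul; [apply ob_div; [auto| ob | lra] | ob].
    + unfold radA2. apply ob_mul; [apply ob_div; [auto| ob | lra] | ob].
    + ob.
    + ob.
    + unfold radN in HN. replace (- (d2 - c2) * - (d2 - c2) + (d1 - c1) * (d1 - c1))
        with ((d1 - c1) * (d1 - c1) + (d2 - c2) * (d2 - c2)) by ring. auto.
    + split; auto.
    + rewrite <- E1, <- E2. unfold sq2, dot, psub; simpl. auto.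
Qed.

Lemma ll_case k1 k2 z : GC k1 -> GC k2 -> islin k1 -> islin k2 ->
  on_curve k1 z -> on_curve k2 z ->
  (exists l : list point, forall w, on_curve k1 w -> on_curve k2 w -> In w l) -> OP z.
Proof.
  intros G1 G2 I1 I2 H1 H2 Hfin.
  destruct (lin_info _ _ G1 I1 H1) as [?|HL1]; [assumption|].
  destruct (lin_info _ _ G2 I2 H2) as [?|HL2]; [assumption|].
  eapply inter_lin_lin; [exact HL1 | exact HL2 | exact Hfin].
Qed.

Lemma lc_case k1 c p z : GC k1 -> islin k1 ->
  on_curve k1 z -> on_curve (Circle c p) z -> OP c -> OP p -> OP z.
Proof.
  intros G1 I1 H1 H2 Gc Gp.
  destruct (lin_info _ _ G1 I1 H1) as [?|HL1]; [assumption|].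
  destruct HL1 as [a1 [a2 [v1 [v2 [t [dd [Ha1 [Ha2 [Hv1 [Hv2 [Hv [Hz _]]]]]]]]]]]].
  rewrite on_circle_iff in H2. rewrite Hz in *.
  apply (inter_lin_circ _ _ _ _ _ _ _ Ha1 Ha2 Hv1 Hv2 Hv Gc Gp H2).
Qed.

Lemma inter_main k1 k2 z : GC k1 -> GC k2 -> on_curve k1 z -> on_curve k2 z ->
  (exists l : list point, forall w, on_curve k1 w -> on_curve k2 w -> In w l) -> OP z.
Proof.
  intros G1 G2 H1 H2 Hfin.
  destruct k1 as [a b|c p|o d]; destruct k2 as [a' b'|c' p'|o' d'];
  try (apply (lc_case _ c' p' z G1 I H1 H2); apply G2; fail);
  try (apply (lc_case _ c p z G2 I H2 H1); apply G1; fail);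
  try (destruct G1 as [Gc Gp], G2 as [Gc' Gp']; exact (inter_CC _ _ _ _ _ Gc Gp Gc' Gp' H1 H2 Hfin));
  try (eapply ll_case; [exact G1|exact G2|exact I|exact I|exact H1|exact H2|exact Hfin]; fail);
  try (destruct G2; eapply lc_case; [exact G1|exact I|exact H1|exact H2|assumption|assumption]; fail);
  try (destruct G1; eapply lc_case; [exact G2|exact I|exact H2|exact H1|assumption|assumption]; fail).
Qed.
End Gen.

Definition tf (m : tool) : R -> R :=
  match m with RA => fun x => sin (PI * x) | RRA => fun x => asin x / PI end.
Definition td (m : tool) : R -> Prop :=
  match m with RA => fun _ => True | RRA => fun x => Rabs x <= 1 end.

Scheme cpt_mut := Induction for cpt Sort Prop
  with ccurve_mut := Induction for ccurve Sort Prop.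
Combined Scheme cc_mut from cpt_mut, ccurve_mut.

Lemma norm_pos_neq o p : p <> o -> 0 < norm (psub p o).
Proof.
  intro H. destruct o as [o1 o2], p as [p1 p2]. unfold norm, dot, psub; simpl.
  apply sqrt_lt_R0. pose proof (sqnn (p1 - o1)). pose proof (sqnn (p2 - o2)).
  destruct (Req_dec ((p1 - o1) * (p1 - o1) + (p2 - o2) * (p2 - o2)) 0) as [E|E]; [|lra].
  apply sum_sq0 in E. exfalso. apply H. f_equal; lra.
Qed.

Section Gen2.
Variable f : R -> R.
Variable dom : R -> Prop.
Notation Ob := (obtainable f dom).

Lemma ob_inv x : Ob x -> x <> 0 -> Ob (/ x).
Proof. intros. replace (/ x) with (1 / x) by (field; auto). apply ob_div; auto using ob_one. Qed.

Lemma OP_unit_dir o p : OP f dom o -> OP f dom p -> p <> o -> OP f dom (unit_dir o p).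
Proof.
  intros Ho Hp Hne. pose proof (norm_pos_neq _ _ Hne) as Hn.
  assert (Hno : Ob (norm (psub p o))).
  { unfold norm. apply ob_sqrt0. apply (OP_sq2 f dom o p Ho Hp). apply (sq2_ge0 o p). }
  destruct Ho as [Ho1 Ho2], Hp as [Hp1 Hp2].
  unfold unit_dir, pscale. split; simpl; apply ob_mul; try (apply ob_inv; auto; lra);
  unfold psub; simpl; apply ob_sub; auto.
Qed.

Lemma OP_dot a b : OP f dom a -> OP f dom b -> Ob (dot a b).
Proof. intros [] []. unfold dot. apply ob_add; apply ob_mul; auto. Qed.

Lemma OP_psub a b : OP f dom a -> OP f dom b -> OP f dom (psub a b).
Proof. intros [] []. split; simpl; apply ob_sub; auto. Qed.
Lemma OP_padd a b : OP f dom a -> OP f dom b -> OP f dom (padd a b).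
Proof. intros [] []. split; simpl; apply ob_add; auto. Qed.
Lemma OP_pscale t a : Ob t -> OP f dom a -> OP f dom (pscale t a).
Proof. intros ? []. split; simpl; apply ob_mul; auto. Qed.
End Gen2.

Lemma forward m : (forall z, cpt m z -> OP (tf m) (td m) z) /\
                  (forall k, ccurve m k -> GC (tf m) (td m) k).
Proof.
  apply cc_mut.
  - split; apply ob0.
  - split; [apply ob_one | apply ob0].
  - intros k1 k2 z _ G1 _ G2 H1 H2 Hfin. exact (inter_main _ _ _ _ _ G1 G2 H1 H2 Hfin).
  - intros o p q x a b Hm _ Ho _ Hp _ Hq _ Hx _ Ha _ Hb [Hpo [Hqo _]] [HX HY]. subst m.
    unfold RRA_point. apply OP_padd; auto. apply OP_pscale; [|apply OP_psub; auto].
    unfold angle_in_right_angle.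
    set (X := dot (psub x o) (unit_dir o p)) in *.
    set (Y := dot (psub x o) (unit_dir o q)) in *.
    assert (HXo : obtainable (tf RRA) (td RRA) X).
    { apply OP_dot. apply OP_psub; auto. apply OP_unit_dir; auto. }
    assert (HYo : obtainable (tf RRA) (td RRA) Y).
    { apply OP_dot. apply OP_psub; auto. apply OP_unit_dir; auto. }
    set (u := Y / X).
    assert (Huo : obtainable (tf RRA) (td RRA) u) by (apply ob_div; auto; lra).
    assert (Hat : atan u = asin (sin (atan u))).
    { rewrite asin_sin; auto. pose proof (atan_bound u). lra. }
    rewrite Hat, sin_atan.
    set (s := u / sqrt (1 + u²)).
    assert (Hso : obtainable (tf RRA) (td RRA) s).
    { unfold s. apply ob_div; auto.
      - apply ob_sqrt0; [|unfold Rsqr; pose proof (sqnn u); lra].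
        apply ob_add; [apply ob_one|unfold Rsqr; apply ob_mul; auto].
      - apply Rgt_not_eq, sqrt_lt_R0. unfold Rsqr; pose proof (sqnn u); lra. }
    replace (2 * asin s / PI) with (2 * (asin s / PI)) by (unfold Rdiv; ring).
    apply ob_mul; [apply ob2|]. apply (ob_fun (tf RRA) (td RRA) s); auto.
    simpl. unfold s. rewrite <- sin_atan. apply Rabs_le. apply SIN_bound.
  - intros a b _ Ha _ Hb Hab. simpl. auto.
  - intros c p _ Hc _ Hp. simpl. auto.
  - intros o p q a b c d Hm _ Ho _ Hp _ Hq _ Ha _ Hb _ Hc _ Hd [Hpo [Hqo _]] Hcd Hle.
    subst m. unfold RA_ray. simpl. split; auto.
    set (P := dist a b). set (Q := dist c d).
    assert (HPo : obtainable (tf RA) (td RA) P) by (apply OP_dist; auto).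
    assert (HQo : obtainable (tf RA) (td RA) Q) by (apply OP_dist; auto).
    assert (Hx : obtainable (tf RA) (td RA) (P / Q / 2)).
    { apply ob_div; [apply ob_div; auto; fold Q in Hcd; lra | apply ob2 | lra]. }
    apply OP_padd; apply OP_pscale; try (apply OP_unit_dir; auto).
    + rewrite cos_sin. replace (PI / 2 + P / Q * (PI / 2)) with (PI * (P / Q / 2 + / 2)).
      2: { field. fold Q in Hcd. lra. }
      apply (ob_fun (tf RA) (td RA) (P / Q / 2 + / 2)); [|exact I].
      apply ob_add; auto. apply ob_inv; [apply ob2|lra].
    + replace (P / Q * (PI / 2)) with (PI * (P / Q / 2)).
      2: { field. fold Q in Hcd. lra. }
      apply (ob_fun (tf RA) (td RA) (P / Q / 2)); [auto|exact I].
Qed.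


Lemma fin_param (S : point -> Prop) a1 a2 v1 v2 c R0 :
  v1 * v1 + v2 * v2 <> 0 ->
  (forall w, S w -> exists t, w = (a1 + t * v1, a2 + t * v2)) ->
  exists l : list point, forall w, S w -> sq2 c w = R0 -> In w l.
Proof.
  intros Hnz HS. destruct c as [c1 c2].
  set (A := v1 * v1 + v2 * v2).
  set (B := 2 * ((a1 - c1) * v1 + (a2 - c2) * v2)).
  set (C := (a1 - c1) * (a1 - c1) + (a2 - c2) * (a2 - c2) - R0).
  set (D := B * B - 4 * A * C).
  set (tp := (sqrt D - B) / (2 * A)). set (tm := (- sqrt D - B) / (2 * A)).
  exists ((a1 + tp * v1, a2 + tp * v2) :: (a1 + tm * v1, a2 + tm * v2) :: nil).
  intros w Hw Hc. destruct (HS w Hw) as [t ->].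
  unfold sq2, dot, psub in Hc; simpl in Hc.
  assert (HD : D = (2 * A * t + B) * (2 * A * t + B)).
  { unfold D, A, B, C. rewrite <- Hc. ring. }
  assert (HA0 : 2 * A <> 0) by (unfold A in *; lra).
  assert (Hs : sqrt D = Rabs (2 * A * t + B)) by (rewrite HD; apply sqrt_sq_abs).
  unfold Rabs in Hs. destruct (Rcase_abs (2 * A * t + B)).
  - right. left. f_equal; f_equal; f_equal; unfold tm; rewrite Hs; field; auto.
  - left. f_equal; f_equal; f_equal; unfold tp; rewrite Hs; field; auto.
Qed.

Lemma on_line_intro a b z t :
  z = (fst a + t * (fst b - fst a), snd a + t * (snd b - snd a)) -> on_curve (Line a b) z.
Proof. intro H. exists t. rewrite H. reflexivity. Qed.

Section Cons.
Variable m : tool.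
Notation C := (cpt m).
Definition K x := C (x, 0).

Lemma cpt_LL a b c d z : C a -> C b -> C c -> C d -> a <> b -> c <> d ->
  (fst b - fst a) * (snd d - snd c) - (snd b - snd a) * (fst d - fst c) <> 0 ->
  on_curve (Line a b) z -> on_curve (Line c d) z -> C z.
Proof.
  intros Ha Hb Hc Hd Hab Hcd Hdet H1 H2.
  apply (cpt_inter m (Line a b) (Line c d) z); try (apply cc_line; auto); auto.
  exists (z :: nil). intros w W1 W2. left.
  destruct a as [a1 a2], b as [b1 b2], c as [c1 c2], d as [d1 d2]; simpl in *.
  destruct H1 as [t Ht], H2 as [s Hs], W1 as [t' Ht'], W2 as [s' Hs'].
  unfold padd, pscale, psub in *; simpl in *.
  rewrite Ht in Hs. rewrite Ht' in Hs'. injection Hs as E1 E2. injection Hs' as F1 F2.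
  assert (Htt : t = t').
  { assert (X1 : t * ((b1 - a1) * (d2 - c2) - (b2 - a2) * (d1 - c1)) =
                 (c1 - a1) * (d2 - c2) - (c2 - a2) * (d1 - c1)).
    { assert (c1 = a1 + t * (b1 - a1) - s * (d1 - c1)) by lra.
      assert (c2 = a2 + t * (b2 - a2) - s * (d2 - c2)) by lra.
      transitivity ((a1 + t * (b1 - a1) - s * (d1 - c1) - a1) * (d2 - c2) -
                    (a2 + t * (b2 - a2) - s * (d2 - c2) - a2) * (d1 - c1)); [ring|].
      rewrite <- H, <- H0. ring. }
    assert (X2 : t' * ((b1 - a1) * (d2 - c2) - (b2 - a2) * (d1 - c1)) =
                 (c1 - a1) * (d2 - c2) - (c2 - a2) * (d1 - c1)).
    { assert (c1 = a1 + t' * (b1 - a1) - s' * (d1 - c1)) by lra.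
      assert (c2 = a2 + t' * (b2 - a2) - s' * (d2 - c2)) by lra.
      transitivity ((a1 + t' * (b1 - a1) - s' * (d1 - c1) - a1) * (d2 - c2) -
                    (a2 + t' * (b2 - a2) - s' * (d2 - c2) - a2) * (d1 - c1)); [ring|].
      rewrite <- H, <- H0. ring. }
    apply (Rmult_eq_reg_r _ _ _ (eq_trans X1 (eq_sym X2)) Hdet). }
  rewrite Ht, Ht', Htt. reflexivity.
Qed.

Lemma cpt_kC k c p z a1 a2 v1 v2 : ccurve m k -> C c -> C p ->
  v1 * v1 + v2 * v2 <> 0 ->
  (forall w, on_curve k w -> exists t, w = (a1 + t * v1, a2 + t * v2)) ->
  on_curve k z -> on_curve (Circle c p) z -> C z.
Proof.
  intros Hk Hc Hp Hnz HS H1 H2.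
  apply (cpt_inter m k (Circle c p) z); auto. apply cc_circle; auto.
  destruct (fin_param (on_curve k) a1 a2 v1 v2 c (sq2 c p) Hnz HS) as [l Hl].
  exists l. intros w W1 W2. apply Hl; auto. apply on_circle_iff; auto.
Qed.

Lemma cpt_LC a b c p z : C a -> C b -> C c -> C p -> a <> b ->
  on_curve (Line a b) z -> on_curve (Circle c p) z -> C z.
Proof.
  intros Ha Hb Hc Hp Hab H1 H2. destruct a as [a1 a2], b as [b1 b2].
  apply (cpt_kC (Line (a1, a2) (b1, b2)) c p z a1 a2 (b1 - a1) (b2 - a2));
    [apply cc_line; auto | auto | auto | apply neq_nz; auto | | auto | auto].
  intros w [t Ht]. exists t. rewrite Ht. reflexivity.
Qed.

Lemma cpt_CC c p c' p' z : C c -> C p -> C c' -> C p' -> c <> c' ->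
  on_curve (Circle c p) z -> on_curve (Circle c' p') z -> C z.
Proof.
  intros Hc Hp Hc' Hp' Hcc H1 H2.
  apply (cpt_inter m (Circle c p) (Circle c' p') z); try (apply cc_circle; auto); auto.
  destruct c as [c1 c2], c' as [d1 d2].
  pose proof (neq_nz _ _ _ _ Hcc) as HN.
  destruct (fin_param (fun w => on_curve (Circle (c1, c2) p) w /\ on_curve (Circle (d1, d2) p') w)
    (radA1 c1 c2 d1 d2 (sq2 (c1, c2) p) (sq2 (d1, d2) p'))
    (radA2 c1 c2 d1 d2 (sq2 (c1, c2) p) (sq2 (d1, d2) p'))
    (- (d2 - c2)) (d1 - c1) (c1, c2) (sq2 (c1, c2) p)) as [l Hl].
  - replace (- (d2 - c2) * - (d2 - c2) + (d1 - c1) * (d1 - c1))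
      with ((d1 - c1) * (d1 - c1) + (d2 - c2) * (d2 - c2)) by ring. auto.
  - intros [w1 w2] [W1 W2]. rewrite on_circle_iff in W1, W2.
    unfold sq2 at 1 in W1. unfold sq2 at 1 in W2. unfold dot, psub in W1, W2; simpl in W1, W2.
    destruct (radical c1 c2 d1 d2 _ _ w1 w2 HN W1 W2) as [t [E1 E2]].
    exists t. rewrite E1, E2 at 1. reflexivity.
  - exists l. intros w W1 W2. apply Hl; auto. apply on_circle_iff; auto.
Qed.
End Cons.

Ltac oncirc := apply on_circle_iff; unfold sq2, dot, psub; simpl.
Ltac pneq := let H := fresh in intro H; injection H; intros; lra.

Lemma s3s : sqrt 3 * sqrt 3 = 3.
Proof. apply sqrt_sqrt; lra. Qed.
Lemma s3p : 0 < sqrt 3.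
Proof. apply sqrt_lt_R0; lra. Qed.

Section Cons2.
Variable m : tool.
Notation C := (cpt m).
Notation K := (K m).

Lemma K0 : K 0. Proof. apply cpt_O. Qed.
Lemma K1 : K 1. Proof. apply cpt_I. Qed.
Lemma OI : ((0, 0) : point) <> (1, 0). Proof. pneq. Qed.

Lemma Kneg x : K x -> K (- x).
Proof.
  intro Hx. apply (cpt_LC m (0,0) (1,0) (0,0) (x,0)); auto using cpt_O, cpt_I, OI.
  - apply (on_line_intro _ _ _ (- x)); simpl; f_equal; ring.
  - oncirc. ring.
Qed.

Lemma Kdouble x : K x -> K (2 * x).
Proof.
  intro Hx. apply (cpt_LC m (0,0) (1,0) (x,0) (0,0)); auto using cpt_O, cpt_I, OI.
  - apply (on_line_intro _ _ _ (2 * x)); simpl; f_equal; ring.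
  - oncirc. ring.
Qed.

Lemma Kadd x y : K x -> K y -> K (x + y).
Proof.
  intros Hx Hy. destruct (Req_dec x y) as [<-|Hxy].
  - replace (x + x) with (2 * x) by ring. apply Kdouble; auto.
  - set (s := sqrt 3). pose proof s3s as Hs. pose proof s3p as Hsp. fold s in Hs, Hsp.
    assert (hs : forall u, (s / 2 * u) * (s / 2 * u) = 3 / 4 * (u * u)).
    { intro u. transitivity (s * s * (u * u) / 4); [field|]. rewrite Hs. field. }
    assert (HQ1 : C ((x + y) / 2, s / 2 * (y - x))).
    { apply (cpt_CC m (x,0) (y,0) (y,0) (x,0)); auto; [pneq| |].
      - oncirc. replace (s / 2 * (y - x) - 0) with (s / 2 * (y - x)) by ring.
        rewrite hs. field.
      - oncirc. replace (s / 2 * (y - x) - 0) with (s / 2 * (y - x)) by ring.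
        rewrite hs. field. }
    assert (HQ2 : C ((x + y) / 2, - (s / 2 * (y - x)))).
    { apply (cpt_CC m (x,0) (y,0) (y,0) (x,0)); auto; [pneq| |].
      - oncirc. replace (- (s / 2 * (y - x)) - 0) with (- 1 * (s / 2 * (y - x))) by ring.
        replace (- 1 * (s / 2 * (y - x)) * (- 1 * (s / 2 * (y - x))))
          with ((s / 2 * (y - x)) * (s / 2 * (y - x))) by ring.
        rewrite hs. field.
      - oncirc. replace (- (s / 2 * (y - x)) - 0) with (- 1 * (s / 2 * (y - x))) by ring.
        replace (- 1 * (s / 2 * (y - x)) * (- 1 * (s / 2 * (y - x))))
          with ((s / 2 * (y - x)) * (s / 2 * (y - x))) by ring.
        rewrite hs. field. }
    assert (Hyx : s / 2 * (y - x) <> 0).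
    { intro H0. apply Rmult_integral in H0. destruct H0; lra. }
    assert (HM : K ((x + y) / 2)).
    { apply (cpt_LL m _ _ (0,0) (1,0) _ HQ1 HQ2 (cpt_O m) (cpt_I m)); [pneq | apply OI | simpl | |].
      - intro H0. apply Hyx. lra.
      - apply (on_line_intro _ _ _ (/ 2)); simpl; f_equal; field.
      - apply (on_line_intro _ _ _ ((x + y) / 2)); simpl; f_equal; field. }
    replace (x + y) with (2 * ((x + y) / 2)) by field. apply Kdouble; auto.
Qed.

Lemma Ksub x y : K x -> K y -> K (x - y).
Proof. intros. apply Kadd; auto. apply Kneg; auto. Qed.

Lemma vert x : K x -> C (x, sqrt 3) /\ C (x, - sqrt 3).
Proof.
  intro Hx. pose proof s3s as Hs. pose proof s3p as Hsp.
  assert (Hm : K (x - 1)) by (apply Ksub; auto using K1).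
  assert (Hp : K (x + 1)) by (apply Kadd; auto using K1).
  split; apply (cpt_CC m (x - 1, 0) (x + 1, 0) (x + 1, 0) (x - 1, 0)); auto; try pneq;
    oncirc; try (rewrite Rmult_opp_opp); lra.
Qed.

Lemma pt x y : K x -> K y -> C (x, y).
Proof.
  intros Hx Hy. pose proof s3s as Hs. pose proof s3p as Hsp.
  destruct (vert x Hx) as [V1 V2].
  assert (Hxy : K (x + y)) by (apply Kadd; auto).
  apply (cpt_LC m _ _ (x, 0) (x + y, 0) _ V1 V2 Hx Hxy); [pneq| |].
  - apply (on_line_intro _ _ _ ((sqrt 3 - y) / (2 * sqrt 3))); simpl; f_equal; field; lra.
  - oncirc. ring.
Qed.

Lemma proj a b : C (a, b) -> K a /\ K b.
Proof.
  intro H. destruct (Req_dec b 0) as [->|Hb]; [split; auto using K0|].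
  assert (H' : C (a, - b)).
  { apply (cpt_CC m (0,0) (a,b) (1,0) (a,b)); auto using cpt_O, cpt_I, OI; oncirc; ring. }
  assert (Ha : K a).
  { apply (cpt_LL m _ _ (0,0) (1,0) _ H H' (cpt_O m) (cpt_I m)); [pneq | apply OI | simpl | |].
    - lra.
    - apply (on_line_intro _ _ _ (/ 2)); simpl; f_equal; field.
    - apply (on_line_intro _ _ _ a); simpl; f_equal; ring. }
  split; auto.
  assert (Hab : K (a + b)).
  { apply (cpt_LC m (0,0) (1,0) (a,0) (a,b)); auto using cpt_O, cpt_I, OI.
    - apply (on_line_intro _ _ _ (a + b)); simpl; f_equal; ring.
    - oncirc. ring. }
  replace b with ((a + b) - a) by ring. apply Ksub; auto.
Qed.

Lemma Kmul x y : K x -> K y -> K (x * y).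
Proof.
  intros Hx Hy. pose proof s3s as Hs. pose proof s3p as Hsp.
  destruct (vert x Hx) as [V1 V2].
  assert (H1y : C (1, y)) by (apply pt; auto using K1).
  assert (Hp : C (x, x * y)).
  { apply (cpt_LL m _ _ _ _ _ (cpt_O m) H1y V1 V2); [pneq | pneq | simpl | |].
    - lra.
    - apply (on_line_intro _ _ _ x); simpl; f_equal; ring.
    - apply (on_line_intro _ _ _ ((sqrt 3 - x * y) / (2 * sqrt 3))); simpl; f_equal; field; lra. }
  apply (proj _ _ Hp).
Qed.

Lemma Kdiv x y : K x -> K y -> y <> 0 -> K (x / y).
Proof.
  intros Hx Hy Hy0. pose proof s3s as Hs. pose proof s3p as Hsp.
  destruct (vert 1 K1) as [V1 V2].
  assert (Hyx : C (y, x)) by (apply pt; auto).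
  assert (Hp : C (1, x / y)).
  { apply (cpt_LL m _ _ _ _ _ (cpt_O m) Hyx V1 V2); [pneq | pneq | simpl | |].
    - intro H0. assert (y * sqrt 3 = 0) by lra. apply Rmult_integral in H. destruct H; lra.
    - apply (on_line_intro _ _ _ (/ y)); simpl; f_equal; field; auto.
    - apply (on_line_intro _ _ _ ((sqrt 3 - x / y) / (2 * sqrt 3))); simpl; f_equal; field; lra. }
  apply (proj _ _ Hp).
Qed.

Lemma Ksqrt x : K x -> 0 < x -> K (sqrt x).
Proof.
  intros Hx Hx0.
  assert (H2 : K 2) by (replace 2 with (1 + 1) by ring; apply Kadd; apply K1).
  assert (Hc : K ((x - 1) / 2)) by (apply Kdiv; [apply Ksub; auto using K1 | auto | lra]).
  assert (HJ : C (0, 1)) by (apply pt; auto using K0, K1).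
  assert (Hr : sqrt x * sqrt x = x) by (apply sqrt_sqrt; lra).
  assert (Hp : C (0, sqrt x)).
  { apply (cpt_LC m (0,0) (0,1) ((x - 1) / 2, 0) (x, 0)); auto using cpt_O; [pneq| |].
    - apply (on_line_intro _ _ _ (sqrt x)); simpl; f_equal; ring.
    - oncirc. replace ((sqrt x - 0) * (sqrt x - 0)) with (sqrt x * sqrt x) by ring.
      rewrite Hr. field. }
  apply (proj _ _ Hp).
Qed.
End Cons2.


Lemma K_nat m n : K m (INR n).
Proof.
  induction n. simpl. apply K0. rewrite S_INR. apply Kadd; auto. apply K1.
Qed.

Lemma K_IZR m z : K m (IZR z).
Proof.
  destruct (Z_le_gt_dec 0 z) as [Hz|Hz].
  - destruct (IZN z Hz) as [n ->]. rewrite <- INR_IZR_INZ. apply K_nat.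
  - assert (Hz' : (0 <= - z)%Z) by lia. destruct (IZN _ Hz') as [n Hn].
    replace (IZR z) with (- IZR (- z)) by (rewrite opp_IZR; ring).
    rewrite Hn, <- INR_IZR_INZ. apply Kneg, K_nat.
Qed.

Lemma sin_period_Z y z : sin (y + 2 * IZR z * PI) = sin y.
Proof.
  destruct (Z_le_gt_dec 0 z) as [Hz|Hz].
  - destruct (IZN z Hz) as [n ->]. rewrite <- INR_IZR_INZ. apply sin_period.
  - assert (Hz' : (0 <= - z)%Z) by lia. destruct (IZN _ Hz') as [n Hn].
    rewrite <- (sin_period (y + 2 * IZR z * PI) n).
    f_equal. rewrite INR_IZR_INZ, <- Hn, opp_IZR. ring.
Qed.

Lemma dist_axis t : 0 <= t -> dist (0, 0) (t, 0) = t.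
Proof.
  intro. rewrite dist_sq2. unfold sq2, dot, psub; simpl.
  replace ((t - 0) * (t - 0) + (0 - 0) * (0 - 0)) with (t * t) by ring.
  apply sqrt_square; auto.
Qed.

Lemma ud1 : unit_dir (0, 0) (1, 0) = (1, 0).
Proof.
  unfold unit_dir, norm, dot, psub, pscale; simpl.
  replace ((1 - 0) * (1 - 0) + (0 - 0) * (0 - 0)) with 1 by ring. rewrite sqrt_1.
  f_equal; field.
Qed.
Lemma ud2 : unit_dir (0, 0) (0, 1) = (0, 1).
Proof.
  unfold unit_dir, norm, dot, psub, pscale; simpl.
  replace ((0 - 0) * (0 - 0) + (1 - 0) * (1 - 0)) with 1 by ring. rewrite sqrt_1.
  f_equal; field.
Qed.

Lemma RA_half t : K RA t -> 0 <= t <= 1 -> K RA (sin (t * (PI / 2))).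
Proof.
  intros Ht Ht01.
  assert (HJ : cpt RA (0, 1)) by (apply pt; auto using K0, K1).
  assert (Hk := cc_RA RA (0,0) (1,0) (0,1) (0,0) (t,0) (0,0) (1,0) eq_refl
     (cpt_O RA) (cpt_I RA) HJ (cpt_O RA) Ht (cpt_O RA) (cpt_I RA)).
  rewrite (dist_axis t) in Hk by lra. rewrite (dist_axis 1) in Hk by lra.
  assert (Hra : right_angle (0, 0) (1, 0) (0, 1)).
  { split; [pneq|split; [pneq|]]. unfold dot, psub; simpl; ring. }
  specialize (Hk Hra ltac:(lra) ltac:(lra)).
  set (phi := t / 1 * (PI / 2)).
  assert (Eray : RA_ray (0, 0) (1, 0) (0, 1) t 1 = Ray (0, 0) (cos phi, sin phi)).
  { unfold RA_ray. rewrite ud1, ud2. unfold padd, pscale; simpl. fold phi.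
    f_equal. f_equal; ring. }
  rewrite Eray in Hk.
  assert (Hcs : cos phi * cos phi + sin phi * sin phi = 1).
  { pose proof (sin2_cos2 phi). unfold Rsqr in H. lra. }
  assert (HZ : cpt RA (cos phi, sin phi)).
  { apply (cpt_kC RA (Ray (0,0) (cos phi, sin phi)) (0,0) (1,0) _ 0 0 (cos phi) (sin phi) Hk
      (cpt_O RA) (cpt_I RA)).
    - lra.
    - intros w [s [_ Hs]]. exists s. rewrite Hs. unfold padd, pscale; simpl. reflexivity.
    - exists 1. split; [lra|]. unfold padd, pscale; simpl. f_equal; ring.
    - oncirc. lra. }
  destruct (proj _ _ _ HZ) as [_ Hs]. unfold phi in Hs.
  replace (t * (PI / 2)) with (t / 1 * (PI / 2)) by field. auto.
Qed.

Lemma RA_01 u : K RA u -> 0 <= u <= 1 -> K RA (sin (PI * u)).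
Proof.
  intros Hu Hu01. destruct (Rle_lt_dec u (1/2)).
  - replace (PI * u) with ((2 * u) * (PI / 2)) by field. apply RA_half; [|lra].
    apply Kdouble; auto.
  - rewrite <- sin_PI_x. replace (PI - PI * u) with ((2 - 2 * u) * (PI / 2)) by field.
    apply RA_half; [|lra]. apply Ksub; [|apply Kdouble; auto].
    replace 2 with (1 + 1) by ring. apply Kadd; apply K1.
Qed.

Lemma RA_sin x : K RA x -> K RA (sin (PI * x)).
Proof.
  intro Hx. destruct (archimed (x / 2)) as [A1 A2].
  set (k := (up (x / 2) - 1)%Z).
  assert (Hk : IZR k = IZR (up (x / 2)) - 1) by (unfold k; rewrite minus_IZR; reflexivity).
  set (u := x - 2 * IZR k).
  assert (Hu : K RA u).
  { apply Ksub; auto. apply Kdouble. apply K_IZR. }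
  assert (Hu02 : 0 <= u < 2) by (unfold u; lra).
  replace (PI * x) with (PI * u + 2 * IZR k * PI) by (unfold u; ring).
  rewrite sin_period_Z.
  destruct (Rle_lt_dec u 1).
  - apply RA_01; auto; lra.
  - replace (PI * u) with (PI * (u - 1) + PI) by ring. rewrite neg_sin.
    apply Kneg. apply RA_01; [apply Ksub; auto using K1|lra].
Qed.

Lemma RRA_atan c s : K RRA c -> K RRA s -> 0 < c -> 0 < s -> K RRA (2 * atan (s / c) / PI).
Proof.
  intros Hc Hs Hc0 Hs0.
  assert (HJ : cpt RRA (0, 1)) by (apply pt; auto using K0, K1).
  assert (HX : cpt RRA (c, s)) by (apply pt; auto).
  assert (Hra : right_angle (0, 0) (1, 0) (0, 1)).
  { split; [pneq|split; [pneq|]]. unfold dot, psub; simpl; ring. }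
  assert (Hin : inside_right_angle (0, 0) (1, 0) (0, 1) (c, s)).
  { unfold inside_right_angle. rewrite ud1, ud2. unfold dot, psub; simpl. split; lra. }
  pose proof (cpt_RRA RRA (0,0) (1,0) (0,1) (c,s) (0,0) (1,0) eq_refl
     (cpt_O RRA) (cpt_I RRA) HJ HX (cpt_O RRA) (cpt_I RRA) Hra Hin) as H.
  unfold RRA_point, angle_in_right_angle in H. rewrite ud1, ud2 in H.
  unfold padd, pscale, psub, dot in H; simpl in H.
  replace (c - 0) with c in H by ring. replace (s - 0) with s in H by ring.
  replace (c * 0 + s * 1) with s in H by ring. replace (c * 1 + s * 0) with c in H by ring.
  unfold K. replace (2 * atan (s / c) / PI, 0) with
    (0 + 2 * atan (s / c) / PI * (1 - 0), 0 + 2 * atan (s / c) / PI * (0 - 0)).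
  - exact H.
  - f_equal; ring.
Qed.

Lemma RRA_asin01 x : K RRA x -> 0 <= x <= 1 -> K RRA (asin x / PI).
Proof.
  intros Hx Hx01. pose proof PI_RGT_0.
  assert (H2 : K RRA 2) by (replace 2 with (1 + 1) by ring; apply Kadd; apply K1).
  destruct (Req_dec x 0) as [->|Hx0].
  - rewrite asin_0. replace (0 / PI) with 0 by (field; lra). apply K0.
  - destruct (Req_dec x 1) as [->|Hx1].
    + rewrite asin_1. replace (PI / 2 / PI) with (1 / 2) by (field; lra).
      apply Kdiv; auto using K1; lra.
    + assert (Hc : 0 < 1 - x * x) by nra.
      assert (HcK : K RRA (sqrt (1 - x * x))).
      { apply Ksqrt; auto. apply Ksub; auto using K1. apply Kmul; auto. }
      pose proof (RRA_atan (sqrt (1 - x * x)) x HcK Hx (sqrt_lt_R0 _ Hc) ltac:(lra)) as H0.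
      rewrite <- asin_atan in H0 by lra.
      replace (asin x / PI) with (2 * asin x / PI / 2) by (field; lra).
      apply Kdiv; auto; lra.
Qed.

Lemma RRA_asin x : K RRA x -> Rabs x <= 1 -> K RRA (asin x / PI).
Proof.
  intros Hx Hb. apply abs_le in Hb. destruct (Rle_lt_dec 0 x).
  - apply RRA_asin01; auto; lra.
  - replace x with (- - x) by ring. rewrite asin_opp.
    replace (- asin (- x) / PI) with (- (asin (- x) / PI)) by (unfold Rdiv; ring).
    apply Kneg. apply RRA_asin01; [apply Kneg; auto | lra].
Qed.

Lemma ob_K m : (forall x, K m x -> td m x -> K m (tf m x)) ->
  forall r, obtainable (tf m) (td m) r -> K m r.
Proof.
  intros Hf r Hr. induction Hr.
  - apply K1.
  - apply Kadd; auto.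
  - apply Ksub; auto.
  - apply Kmul; auto.
  - apply Kdiv; auto.
  - apply Ksqrt; auto.
  - apply Hf; auto.
Qed.

Lemma K_constr m r : K m r -> constructible m r.
Proof.
  intro H. exists (0, 0), (r, 0). split; [apply cpt_O|split; auto].
  rewrite dist_sq2. unfold sq2, dot, psub; simpl.
  replace ((r - 0) * (r - 0) + (0 - 0) * (0 - 0)) with (r * r) by ring.
  rewrite sqrt_sq_abs. reflexivity.
Qed.

Lemma constr_ob m r : constructible m r -> obtainable (tf m) (td m) r.
Proof.
  intros [a [b [Ha [Hb Hr]]]]. destruct (forward m) as [F _].
  pose proof (OP_dist _ _ a b (F a Ha) (F b Hb)) as H. rewrite <- Hr in H.
  unfold Rabs in H. destruct (Rcase_abs r); auto.
  replace r with (- - r) by ring. apply ob_opp. auto.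
Qed.

Theorem theorem7p2 :
  (forall r : R, RA_constructible r <-> RA_obtainable r) /\
  (forall r : R, RRA_constructible r <-> RRA_obtainable r).
Proof.
  split; intro r; split; intro H.
  - exact (constr_ob RA r H).
  - apply K_constr. apply (ob_K RA); auto. intros x Hx _. apply RA_sin; auto.
  - exact (constr_ob RRA r H).
  - apply K_constr. apply (ob_K RRA); auto. intros x Hx Hd. apply RRA_asin; auto.
Qed.
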